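(* There is an absolute constant $C_0$ such that for every $C\ge C_0$ the following holds. Let $G$ be a finite group with $|G|\ge2$, $S\subseteq G$ symmetric, $H=\mathrm{Cay}(G,S)$ unweighted, and $\alpha>0$. Suppose $s_1,\dots,s_\ell\in\bar S$ and $v_1,\dots,v_\ell\in\mathbb{R}^G$ with $v_i^\top L_Hv_i>0$ satisfy $\mathrm{score}(s_i,v_i)\ge\alpha$ for all $i$ and $\mathrm{score}(s_i,v_j)\le\frac{\alpha}{C\log^2|G|}$ for all $1\le j<i\le\ell$. Then $\ell\le\log_2|G|$. More precisely, for $\ell'=\min(\ell,\lfloor\log_2|G|\rfloor+1)$, the products $\prod_{i\in T}s_i$ (taken in increasing order of index), for $T\subseteq[\ell']$, are pairwise distinct elements of $G$.
   Context: For $g\in G$, $A_g\in\{0,1\}^{G\times G}$ is the permutation matrix with $(A_g)_{u,v}=1$ iff $v=ug$. $S$ symmetric means $s\in S\Rightarrow s^{-1}\in S$; $\bar S\subseteq S$ contains exactly one element of each pair $\{s,s^{-1}\}$ with $s\neq s^{-1}$ and every $s\in S$ with $s=s^{-1}$. $L_s=2I-A_s-A_{s^{-1}}$ if $s\ne s^{-1}$, $L_s=I-A_s$ if $s=s^{-1}$; $L_H=\sum_{s\in\bar S}L_s$. For $v$ with $v^\top L_Hv>0$, $\mathrm{score}(s,v)=\frac{v^\top L_sv}{v^\top L_Hv}$. *)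

(* Defs.v *)
From HB Require Import structures.
From mathcomp Require Import all_boot all_order all_algebra all_fingroup.
From mathcomp Require Import reals exp.
Set Implicit Arguments. Unset Strict Implicit. Unset Printing Implicit Defensive.
Import Order.TTheory GRing.Theory Num.Theory.
Local Open Scope ring_scope.

Section CayleyDefs.
Variables (R : realType) (gT : finGroupType).

Definition Amx (g : gT) : gT -> gT -> R :=
  fun u w => if w == (u * g)%g then 1 else 0.

Definition Imx : gT -> gT -> R := fun u w => if w == u then 1 else 0.

Definition Lmx (s : gT) : gT -> gT -> R :=
  if s != (s^-1)%g then fun u w => 2 * Imx u w - Amx s u w - Amx (s^-1)%g u w
  else fun u w => Imx u w - Amx s u w.

Definition LHmx (Sbar : {set gT}) : gT -> gT -> R :=
  fun u w => \sum_(s in Sbar) Lmx s u w.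

Definition qform (M : gT -> gT -> R) (v : gT -> R) : R :=
  \sum_u \sum_w v u * M u w * v w.

Definition score (Sbar : {set gT}) (s : gT) (v : gT -> R) : R :=
  qform (Lmx s) v / qform (LHmx Sbar) v.

End CayleyDefs.

Definition symmetric_set (gT : finGroupType) (S : {set gT}) : Prop :=
  forall s, s \in S -> (s^-1)%g \in S.

Definition is_Sbar (gT : finGroupType) (S Sbar : {set gT}) : Prop :=
  Sbar \subset S /\
  forall s, s \in S ->
    if s == (s^-1)%g then s \in Sbar
    else (s \in Sbar) (+) ((s^-1)%g \in Sbar).

(* Main.v *)
Require Import Defs.
From HB Require Import structures.
From mathcomp Require Import all_boot all_order all_algebra all_fingroup.
From mathcomp Require Import reals exp.
From mathcomp Require Import ring lra zify.
Import Order.TTheory GRing.Theory Num.Theory.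
Local Open Scope ring_scope.
Set Implicit Arguments. Unset Strict Implicit.

Section DSec.
Variables (R : realType) (gT : finGroupType).
Implicit Types (v : gT -> R) (g h : gT).

Definition Dq g v : R := \sum_u (v u - v (u * g)%g) ^+ 2.

Lemma sum_reindex g (F : gT -> R) : \sum_u F (u * g)%g = \sum_u F u.
Proof. by rewrite [RHS](reindex_inj (@mulIg _ g)). Qed.

Lemma Dq_ge0 g v : 0 <= Dq g v.
Proof. by apply: sumr_ge0 => u _; rewrite sqr_ge0. Qed.

Lemma Dq1 v : Dq 1%g v = 0.
Proof. by apply: big1 => u _; rewrite mulg1 subrr expr0n. Qed.

Lemma Dq_expand g v :
  Dq g v = 2 * \sum_u v u ^+ 2 - 2 * \sum_u v u * v (u * g)%g.
Proof.
have E : \sum_u v (u * g)%g ^+ 2 = \sum_u v u ^+ 2 by rewrite (sum_reindex g (fun u => v u ^+ 2)).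
rewrite /Dq.
transitivity (\sum_u ((v u ^+ 2 + v (u * g)%g ^+ 2) - 2 * (v u * v (u * g)%g))).
  by apply: eq_bigr => u _; ring.
by rewrite sumrB big_split /= E -mulr_sumr; ring.
Qed.

Lemma sum_inv g v : \sum_u v u * v (u * g^-1)%g = \sum_u v u * v (u * g)%g.
Proof.
rewrite -(sum_reindex g (fun u => v u * v (u * g^-1)%g)) /=.
by apply: eq_bigr => u _; rewrite mulgK mulrC.
Qed.

Lemma DqV g v : Dq g^-1 v = Dq g v.
Proof. by rewrite !Dq_expand sum_inv. Qed.

Lemma sum_delta (f : gT -> R) x : \sum_w f w * (if w == x then 1 else 0) = f x.
Proof.
rewrite (bigD1 x) //= eqxx mulr1 big1 ?addr0 // => w /negbTE ->; by rewrite mulr0.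
Qed.

Lemma qform_L g v :
  qform (Lmx R g) v = if g != g^-1%g then Dq g v else Dq g v / 2.
Proof.
rewrite /qform /Lmx Dq_expand; case: ifP => _.
  transitivity (\sum_u (2 * v u ^+ 2 - v u * v (u * g)%g - v u * v (u * g^-1)%g)).
    apply: eq_bigr => u _.
    transitivity (\sum_w (2 * (v w * Imx R u w * v u) - v w * Amx R g u w * v u
       - v w * Amx R g^-1 u w * v u)).
      by apply: eq_bigr => w _; ring.
    rewrite !sumrB -mulr_sumr /Imx /Amx.
    rewrite -!mulr_suml !sum_delta; ring.
  by rewrite !sumrB -mulr_sumr sum_inv; ring.
transitivity (\sum_u (v u ^+ 2 - v u * v (u * g)%g)).
  apply: eq_bigr => u _.
  transitivity (\sum_w ((v w * Imx R u w * v u) - v w * Amx R g u w * v u)).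
    by apply: eq_bigr => w _; ring.
  rewrite !sumrB /Imx /Amx.
  rewrite -!mulr_suml !sum_delta; ring.
by rewrite !sumrB; field.
Qed.

Lemma qform_L_le g v : qform (Lmx R g) v <= Dq g v.
Proof.
rewrite qform_L; case: ifP => _ //; have := Dq_ge0 g v; lra.
Qed.

Lemma Dq_le_qform g v : Dq g v <= 2 * qform (Lmx R g) v.
Proof.
rewrite qform_L; case: ifP => _; have := Dq_ge0 g v; lra.
Qed.

Lemma DqM (m : R) g h v : 0 <= m ->
  m * Dq (g * h)%g v <= m * (m + 1) * Dq g v + (m + 1) * Dq h v.
Proof.
move=> m0.
have Eh : Dq h v = \sum_u (v (u * g)%g - v (u * g * h)%g) ^+ 2.
  by rewrite /Dq -(sum_reindex g (fun u => (v u - v (u * h)%g) ^+ 2)).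
rewrite Eh /Dq !mulr_sumr -big_split /=.
apply: ler_sum => u _; rewrite mulgA.
set a := v u - v (u * g)%g; set b := v (u * g)%g - v (u * g * h)%g.
have -> : v u - v (u * g * h)%g = a + b by rewrite /a /b; ring.
have := sqr_ge0 (m * a - b); nra.
Qed.

Lemma DqM2 g h v : Dq (g * h)%g v <= 2 * Dq g v + 2 * Dq h v.
Proof. have := @DqM 1 g h v ler01; rewrite mul1r (_ : 1 + 1 = 2 :> R) // mul1r; lra. Qed.

Lemma Dq_prod n (F : nat -> gT) v :
  Dq (\prod_(i < n) F i)%g v <= n%:R * \sum_(i < n) Dq (F i) v.
Proof.
elim: n F => [|n IH] F; first by rewrite big_ord0 Dq1 mul0r.
rewrite big_ord_recl [X in _ <= _ * X]big_ord_recl /=.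
have IH' := IH (fun i => F i.+1).
case: n IH IH' => [|n] _ IH'.
  by rewrite big_ord0 mulg1 big_ord0 addr0 mul1r.
set P := (\prod_(i < n.+1) F (lift ord0 i))%g.
set S := \sum_(i < n.+1) Dq (F (lift ord0 i)) v.
move: IH'; rewrite -/P -/S => IH'.
have H := @DqM n.+1%:R (F 0%N) P v (ler0n R n.+1).
have Hn : 0 < n.+1%:R :> R by rewrite ltr0Sn.
have := Dq_ge0 (F 0%N) v.
rewrite [n.+2%:R]mulrSr.
rewrite -(ler_pM2l Hn).
nra.
Qed.
End DSec.
Unset Implicit Arguments. Set Strict Implicit.
Section Comb.
Variables (R : realType) (gT : finGroupType) (Sbar : {set gT}) (l : nat)
  (s : 'I_l -> gT) (v : 'I_l -> gT -> R) (alpha eps : R) (L : nat).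
Hypothesis Q0 : forall i, 0 < qform (LHmx R Sbar) (v i).
Hypothesis Halpha : forall i, alpha <= score Sbar (s i) (v i).
Hypothesis Heps : forall i j : 'I_l, (j < i)%N -> score Sbar (s i) (v j) <= eps.
Hypothesis eps0 : 0 <= eps.
Hypothesis small : 8 * L%:R ^+ 2 * eps < alpha.
Hypothesis Ll : (L <= l)%N.

Definition memn (T : {set 'I_l}) (i : nat) : bool :=
  if insub i is Some j then j \in T else false.
Definition sn (i : nat) : gT := if insub i is Some j then s j else 1%g.
Definition Gn (T : {set 'I_l}) (i : nat) : gT := if memn T i then sn i else 1%g.

Let Xs := [set i : 'I_l | (i < L)%N].

Lemma memn_val T (j : 'I_l) : memn T j = (j \in T).
Proof. by rewrite /memn valK. Qed.
Lemma sn_val (j : 'I_l) : sn j = s j.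
Proof. by rewrite /sn valK. Qed.

Lemma memn_lt (T : {set 'I_l}) i : T \subset Xs -> memn T i -> (i < L)%N.
Proof.
move=> sub; rewrite /memn; case: insubP => [j _ <-|//] jT.
by have := subsetP sub j jT; rewrite inE.
Qed.

Lemma prodE (T : {set 'I_l}) : T \subset Xs ->
  (\prod_(i in T) s i)%g = (\prod_(0 <= i < L) Gn T i)%g.
Proof.
move=> sub.
transitivity (\prod_(0 <= i < l) Gn T i)%g.
  rewrite big_mkcond big_mkord; apply: eq_bigr => i _.
  by rewrite /Gn memn_val sn_val.
rewrite (big_cat_nat (leq0n L) Ll) /= [X in (_ * X)%g = _]big1_seq ?mulg1 //.
move=> i /andP[_]; rewrite mem_index_iota => /andP[Li _].
rewrite /Gn; case: ifP => // /(memn_lt _ _ sub); by rewrite ltnNge Li.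
Qed.

Let Q i := qform (LHmx R Sbar) (v i).

Lemma qsmall (jj kk : 'I_l) : (kk < jj)%N -> qform (Lmx R (s jj)) (v kk) <= eps * Q kk.
Proof. by move=> lt; have := Heps _ _ lt; rewrite /score ler_pdivrMr // Q0. Qed.

Lemma qbig (kk : 'I_l) : alpha * Q kk <= qform (Lmx R (s kk)) (v kk).
Proof. by have := Halpha kk; rewrite /score ler_pdivlMr // Q0. Qed.

Lemma Dq_tail (T : {set 'I_l}) (kk : 'I_l) :
  Dq (\prod_(kk.+1 <= i < L) Gn T i)%g (v kk) <= L%:R * (L%:R * (2 * (eps * Q kk))).
Proof.
have Qk := Q0 kk.
have e2 : 0 <= 2 * (eps * Q kk) by rewrite mulr_ge0 ?mulr_ge0 // ltW.
rewrite -{1}[kk.+1]add0n big_addn big_mkord.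
apply: le_trans (Dq_prod (L - kk.+1) (fun i => Gn T (i + kk.+1)) (v kk)) _.
have term : forall i : 'I_(L - kk.+1), Dq (Gn T (i + kk.+1)) (v kk) <= 2 * (eps * Q kk).
  move=> i; rewrite /Gn /memn /sn; case: insubP => [jj _ Ejj | _]; last by rewrite Dq1.
  case: ifP => _; last by rewrite Dq1.
  apply: le_trans (Dq_le_qform _ _) _.
  rewrite ler_pM2l // qsmall // Ejj; lia.
apply: ler_pM; first by rewrite ler0n.
- by apply: sumr_ge0 => i _; apply: Dq_ge0.
- by rewrite ler_nat leq_subr.
apply: le_trans (ler_sum _ (fun i _ => term i)) _.
rewrite sumr_const card_ord -[X in X <= _]mulr_natl.
by apply: ler_wpM2r => //; rewrite ler_nat leq_subr.
Qed.

Lemma core (T1 T2 : {set 'I_l}) (kk : 'I_l) : T1 \subset Xs -> T2 \subset Xs ->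
  kk \in T1 -> kk \notin T2 -> (forall i, (i < kk)%N -> memn T1 i = memn T2 i) ->
  (\prod_(i in T1) s i)%g = (\prod_(i in T2) s i)%g -> False.
Proof.
move=> sub1 sub2 k1 k2 pre.
have kL : (kk < L)%N by apply: (memn_lt _ _ sub1); rewrite memn_val.
rewrite !prodE // !(big_cat_nat (leq0n kk) (ltnW kL)) /= !(big_ltn kL).
rewrite (@eq_big_nat _ _ _ 0 kk _ (Gn T2)); last first.
  by move=> i /andP[_ ik]; rewrite /Gn pre.
move/mulgI.
have g1 : Gn T1 kk = s kk by rewrite /Gn memn_val k1 sn_val.
have g2 : Gn T2 kk = 1%g by rewrite /Gn memn_val (negbTE k2).
rewrite g1 g2 mul1g.
set B1 := (\prod_(kk.+1 <= i < L) Gn T1 i)%g.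
set B2 := (\prod_(kk.+1 <= i < L) Gn T2 i)%g => E.
have Es : s kk = (B2 * B1^-1)%g by rewrite -E mulgK.
have H1 := qbig kk.
have H2 := qform_L_le (s kk) (v kk).
have H3 := DqM2 B2 B1^-1 (v kk).
rewrite DqV -Es in H3.
have H4 := Dq_tail T1 kk; have H5 := Dq_tail T2 kk.
rewrite -/B1 in H4; rewrite -/B2 in H5.
have Qk := Q0 kk; rewrite -/(Q kk) in Qk.
set q := Q kk in H1 H4 H5 Qk.
have sm := small.
set LL := L%:R in H4 H5 sm.
have : 8 * LL ^+ 2 * eps * q < alpha * q by rewrite ltr_pM2r.
nra.
Qed.

Lemma distinct (T1 T2 : {set 'I_l}) : T1 \subset Xs -> T2 \subset Xs ->
  (\prod_(i in T1) s i)%g = (\prod_(i in T2) s i)%g -> T1 = T2.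
Proof.
move=> s1 s2 E.
case: (boolP [exists j : 'I_l, (j \in T1) != (j \in T2)]) => [ex|]; last first.
  rewrite negb_exists => /forallP H; apply/setP => j; have := H j.
  by case: (j \in T1); case: (j \in T2).
exfalso.
have exP : exists n, (memn T1 n != memn T2 n).
  by case/existsP: ex => j Hj; exists j; rewrite !memn_val.
case: (ex_minnP exP) => k Pk mink.
have [kk Ekk] : exists kk : 'I_l, val kk = k.
  move: Pk; rewrite /memn; case: insubP => [kk _ <- _| _]; last by rewrite eqxx.
  by exists kk.
subst k; rewrite !memn_val in Pk.
have pre : forall i, (i < kk)%N -> memn T1 i = memn T2 i.
  move=> i lt; apply/eqP; apply: contraTT lt => ne; rewrite -leqNgt; exact: mink.
case: (boolP (kk \in T1)) Pk => k1 /=.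
  rewrite eq_sym eqb_id => k2; apply: (core _ _ _ s1 s2 k1 k2 pre E).
rewrite eq_sym eqbF_neg negbK => k2.
apply: (core _ _ _ s2 s1 k2 k1 _ (esym E)) => i lt; by rewrite pre.
Qed.
End Comb.

Lemma ln2_ge (R : realType) : 1 / 2 <= ln (2 : R).
Proof.
have := expR_ge1Dx (- ln (2 : R)); rewrite expRN lnK ?posrE //; lra.
Qed.

Theorem mainTheorem6 :
  exists C0 : nat,
  forall (R : realType) (C : R), (C0%:R <= C) ->
  forall (gT : finGroupType) (S Sbar : {set gT}) (alpha : R) (l : nat)
         (s : 'I_l -> gT) (v : 'I_l -> gT -> R),
    (2 <= #|gT|)%N ->
    symmetric_set S ->
    is_Sbar S Sbar ->
    0 < alpha ->
    (forall i, s i \in Sbar) ->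
    (forall i, 0 < qform (LHmx R Sbar) (v i)) ->
    (forall i, alpha <= score Sbar (s i) (v i)) ->
    (forall i j : 'I_l, (j < i)%N ->
       score Sbar (s i) (v j) <= alpha / (C * ln (#|gT|%:R : R) ^+ 2)) ->
    (l%:R <= ln (#|gT|%:R : R) / ln 2) /\
    (forall T1 T2 : {set 'I_l},
       T1 \subset [set i : 'I_l | (i < minn l (trunc_log 2 #|gT|).+1)%N] ->
       T2 \subset [set i : 'I_l | (i < minn l (trunc_log 2 #|gT|).+1)%N] ->
       (\prod_(i in T1) s i)%g = (\prod_(i in T2) s i)%g -> T1 = T2).
Proof.
exists 200%N.
move=> R C HC gT S Sbar alpha l s v n2 _ _ a0 _ Q0 Ha He.
set N := #|gT| in n2 He *.
set t := trunc_log 2 N.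
set L := minn l t.+1.
have l2 := ln2_ge R.
have t1 : (1 <= t)%N by apply: trunc_log_max.
have tN : (2 ^ t <= N)%N by apply: trunc_logP; lia.
have Nt : (N < 2 ^ t.+1)%N by apply: trunc_log_ltn.
have tln : t%:R * ln (2 : R) <= ln (N%:R : R).
  rewrite mulr_natl -lnXn // ler_ln ?posrE ?exprn_gt0 ?ltr0n //; last by lia.
  by rewrite -natrX ler_nat.
have lnN : 1 / 2 <= ln (N%:R : R).
  apply: le_trans l2 _; rewrite ler_ln ?posrE ?ltr0n //; try lia.
  by rewrite ler_nat.
set lnN' := ln (N%:R : R) in tln lnN He *.
have LL : (L <= t.+1)%N by apply: geq_minr.
have LLR : (L%:R : R) <= t%:R + 1 by rewrite natr1 ler_nat.
have tR : 1 <= (t%:R : R) by rewrite ler1n.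
have L4 : (L%:R : R) <= 4 * lnN' by nra.
have C200 : 200 <= C := HC.
set D := C * lnN' ^+ 2.
have D0 : 0 < D by rewrite /D; nra.
have small : 8 * (L%:R : R) ^+ 2 * (alpha / D) < alpha.
  rewrite mulrA ltr_pdivrMr //.
  have L0 : 0 <= (L%:R : R) by rewrite ler0n.
  have : 8 * (L%:R : R) ^+ 2 < D by rewrite /D; nra.
  nra.
have eps0 : 0 <= alpha / D by rewrite divr_ge0 // ltW.
have dist := @distinct R gT Sbar l s v alpha (alpha / D) L Q0 Ha He eps0 small (geq_minl l t.+1).
split; last exact: dist.
have lt : (l <= t)%N.
  rewrite leqNgt; apply/negP => tl.
  have LE : L = t.+1 by rewrite /L; lia.
  set Xs := [set i : 'I_l | (i < L)%N].
  have winj : injective (widen_ord (geq_minl l t.+1)).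
    by move=> i j E; apply: val_inj; exact: (congr1 (@nat_of_ord l) E).
  have cX : (L <= #|Xs|)%N.
    rewrite -{1}(card_ord L) -(card_imset _ winj); apply: subset_leq_card.
    by apply/subsetP => x /imsetP[i _ ->]; rewrite inE /=; exact: ltn_ord.
  set f := fun T : {set 'I_l} => (\prod_(i in T) s i)%g.
  have inj : {in powerset Xs &, injective f}.
    by move=> A B; rewrite !powersetE => sA sB; exact: dist.
  have := max_card (mem (f @: powerset Xs)); rewrite card_in_imset // card_powerset.
  have := @leq_pexp2l 2 _ _ isT cX; rewrite LE -/N; move=> a b; have := leq_ltn_trans (leq_trans a b) Nt; by rewrite ltnn.
have l20 : 0 < ln (2 : R) by lra.
rewrite ler_pdivlMr //; apply: le_trans tln.
by rewrite ler_pM2r // ler_nat.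
Qed.
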